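(* Let $\Gamma\subseteq\mathbb R^n$ be an open convex set, $S\subseteq\Gamma$ a nonempty convex set, and $f:\Gamma\to\mathbb R$ a Fréchet differentiable function that is quasiconvex on $\Gamma$. Let $\bar S=\arg\min\{f(x)\mid x\in S\}$. If the set $\{x\in\bar S\mid \nabla f(x)\neq 0\}$ is nonempty, then the normalized gradient $\nabla f(x)/\|\nabla f(x)\|$ is constant on this set; i.e., for all $x,y\in\bar S$ with $\nabla f(x)\ne0$, $\nabla f(y)\ne 0$ one has $\nabla f(x)/\|\nabla f(x)\|=\nabla f(y)/\|\nabla f(y)\|$.
   Context: A function $f:\Gamma\to\mathbb R$ on a convex set $\Gamma\subseteq\mathbb R^n$ is quasiconvex on $\Gamma$ iff $f(x+t(y-x))\le\max\{f(x),f(y)\}$ for all $x,y\in\Gamma$ and $t\in[0,1]$. $\|\cdot\|$ is the Euclidean norm. *)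

(* Defs.v *)
From mathcomp Require Import all_boot.
From Stdlib Require Import Reals.
Open Scope R_scope.

Definition vec (n : nat) := 'I_n -> R.

Definition vzero {n} : vec n := fun _ => 0.
Definition vadd {n} (u v : vec n) : vec n := fun i => u i + v i.
Definition vsub {n} (u v : vec n) : vec n := fun i => u i - v i.
Definition vscale {n} (a : R) (u : vec n) : vec n := fun i => a * u i.

Definition dot {n} (u v : vec n) : R := \big[Rplus/0]_(i < n) (u i * v i).
Definition norm {n} (u : vec n) : R := sqrt (dot u u).

Definition convex_in_Rn {n} (C : vec n -> Prop) : Prop :=
  forall x y t, C x -> C y -> 0 <= t <= 1 -> C (vadd x (vscale t (vsub y x))).

Definition open_in_Rn {n} (C : vec n -> Prop) : Prop :=
  forall x, C x -> exists eps, 0 < eps /\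
    forall y, norm (vsub y x) < eps -> C y.

Definition quasiconvex_on {n} (Gamma : vec n -> Prop) (f : vec n -> R) : Prop :=
  forall x y t, Gamma x -> Gamma y -> 0 <= t <= 1 ->
    f (vadd x (vscale t (vsub y x))) <= Rmax (f x) (f y).

Definition frechet_gradient {n} (Gamma : vec n -> Prop) (f : vec n -> R)
    (x g : vec n) : Prop :=
  forall eps, 0 < eps -> exists delta, 0 < delta /\
    forall h, norm h < delta -> Gamma (vadd x h) ->
      Rabs (f (vadd x h) - f x - dot g h) <= eps * norm h.

Definition argmin_on {n} (S : vec n -> Prop) (f : vec n -> R) (x : vec n) : Prop :=
  S x /\ forall y, S y -> f x <= f y.

(* Main.v *)
Require Import Defs.
From HB Require Import structures.
From mathcomp Require Import all_boot.
From Stdlib Require Import Reals.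
From Stdlib Require Import Lra Psatz FunctionalExtensionality.
Open Scope R_scope.

HB.instance Definition _ := Monoid.isComLaw.Build R 0 Rplus (fun a b c => esym (Rplus_assoc a b c)) Rplus_comm Rplus_0_l.

Lemma sum_add n (F G : 'I_n -> R) : \big[Rplus/0]_(i<n) (F i + G i) = \big[Rplus/0]_(i<n) F i + \big[Rplus/0]_(i<n) G i.
Proof. exact: big_split. Qed.

Lemma sum_scale n c (F : 'I_n -> R) : \big[Rplus/0]_(i<n) (c * F i) = c * \big[Rplus/0]_(i<n) F i.
Proof. elim/big_rec2: _ => [|i x y _ ->]; ring. Qed.

Lemma sum_nonneg n (F : 'I_n -> R) : (forall i, 0 <= F i) -> 0 <= \big[Rplus/0]_(i<n) F i.
Proof. move=> H; elim/big_rec: _ => [|i x _ Hx]; [lra| have := H i; lra]. Qed.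

Lemma sum_zero n (F : 'I_n -> R) : (forall i, 0 <= F i) -> \big[Rplus/0]_(i<n) F i = 0 -> forall i, F i = 0.
Proof.
move=> H Hs i. move: Hs; rewrite (bigD1 i) //=.
set s := \big[_/_]_(j < n | _) _ => Hs.
have : 0 <= s.
  rewrite /s; apply: (big_ind (fun x => 0 <= x)); [lra| move=> a b; lra | move=> j _; exact: H].
have := H i; intros; lra.
Qed.
Lemma dot_ext n (u u' v v' : vec n) : (forall i, u i = u' i) -> (forall i, v i = v' i) -> dot u v = dot u' v'.
Proof. move=> Hu Hv; apply: eq_bigr => i _; by rewrite Hu Hv. Qed.

Lemma dot_add_r n (u v w : vec n) : dot u (vadd v w) = dot u v + dot u w.
Proof. rewrite /dot -sum_add; apply: eq_bigr => i _; rewrite /vadd; ring. Qed.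

Lemma dot_scale_r n c (u v : vec n) : dot u (vscale c v) = c * dot u v.
Proof. rewrite /dot -sum_scale; apply: eq_bigr => i _; rewrite /vscale; ring. Qed.

Lemma dot_scale_l n c (u v : vec n) : dot (vscale c u) v = c * dot u v.
Proof. rewrite /dot -sum_scale; apply: eq_bigr => i _; rewrite /vscale; ring. Qed.

Lemma dot_sub_r n (u v w : vec n) : dot u (vsub v w) = dot u v - dot u w.
Proof.
have -> : dot u (vsub v w) = dot u (vadd v (vscale (-1) w)) by apply: dot_ext => // i; rewrite /vsub /vadd /vscale; ring.
rewrite dot_add_r dot_scale_r; ring.
Qed.

Lemma dot_comm n (u v : vec n) : dot u v = dot v u.
Proof. apply: eq_bigr => i _; ring. Qed.

Lemma dot_sub_l n (u v w : vec n) : dot (vsub v w) u = dot v u - dot w u.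
Proof. by rewrite dot_comm dot_sub_r (dot_comm _ u v) (dot_comm _ u w). Qed.

Lemma dot_self_ge0 n (u : vec n) : 0 <= dot u u.
Proof. apply: sum_nonneg => i; nra. Qed.

Lemma norm_ge0 n (u : vec n) : 0 <= norm u.
Proof. exact: sqrt_pos. Qed.

Lemma norm_scale n t (u : vec n) : norm (vscale t u) = Rabs t * norm u.
Proof.
rewrite /norm dot_scale_l dot_scale_r -Rmult_assoc sqrt_mult_alt; last nra.
by rewrite -(sqrt_Rsqr_abs t).
Qed.

Lemma abs_between a b : Rabs a <= b -> -b <= a <= b.
Proof. move=> H; split_Rabs; lra. Qed.

Lemma aux_small a b : 0 < a -> 0 <= b -> 0 < a / (2*(b+1)) /\ a / (2*(b+1)) * b < a.
Proof.
move=> Ha Hb. have Hp : 0 < a / (2*(b+1)) by apply: Rdiv_lt_0_compat; lra.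
have He : a / (2*(b+1)) * (2*(b+1)) = a by field; lra.
split; nra.
Qed.

Lemma small_t n (h : vec n) del : 0 < del -> exists t, 0 < t <= 1 /\ norm (vscale t h) < del.
Proof.
move=> Hd. have nh0 := norm_ge0 _ h.
have [H1 H2] := aux_small del (norm h) Hd nh0.
exists (Rmin 1 (del / (2*(norm h+1)))).
have t0 : 0 < Rmin 1 (del / (2*(norm h+1))) by apply: Rmin_pos; lra.
have t1 := Rmin_l 1 (del / (2*(norm h+1))).
have t2 := Rmin_r 1 (del / (2*(norm h+1))).
split; first lra.
rewrite norm_scale Rabs_pos_eq; last lra.
nra.
Qed.

Lemma small_t_any n (h : vec n) del : 0 < del -> forall t, 0 < t <= del / (2*(norm h+1)) -> norm (vscale t h) < del.
Proof.
move=> Hd t Ht. have nh0 := norm_ge0 _ h.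
have [H1 H2] := aux_small del (norm h) Hd nh0.
rewrite norm_scale Rabs_pos_eq; last lra.
nra.
Qed.

Lemma dir_le n Gamma f (x g h : vec n) : frechet_gradient Gamma f x g ->
  (forall t, 0 < t <= 1 -> Gamma (vadd x (vscale t h)) /\ f (vadd x (vscale t h)) <= f x) ->
  dot g h <= 0.
Proof.
move=> Hf Ht. apply: Rnot_lt_le => Hpos.
have nh0 := norm_ge0 _ h.
have [e0 e1] := aux_small (dot g h) (norm h) Hpos nh0.
have [del [Hd Hdel]] := Hf _ e0.
have [t [Ht01 Hn]] := small_t _ h del Hd.
have [HG Hle] := Ht t Ht01.
have := Hdel _ Hn HG. rewrite dot_scale_r norm_scale (Rabs_pos_eq t); last lra.
move/abs_between => [A B].
have : t * (dot g h / (2 * (norm h + 1)) * norm h) < t * dot g h by apply: Rmult_lt_compat_l; lra.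
nra.
Qed.

Lemma dir_ge n Gamma f (x g h : vec n) : frechet_gradient Gamma f x g ->
  (forall t, 0 < t <= 1 -> Gamma (vadd x (vscale t h)) /\ f x <= f (vadd x (vscale t h))) ->
  0 <= dot g h.
Proof.
move=> Hf Ht. apply: Rnot_lt_le => Hneg.
have nh0 := norm_ge0 _ h.
have Hpos : 0 < - dot g h by lra.
have [e0 e1] := aux_small (- dot g h) (norm h) Hpos nh0.
have [del [Hd Hdel]] := Hf _ e0.
have [t [Ht01 Hn]] := small_t _ h del Hd.
have [HG Hle] := Ht t Ht01.
have := Hdel _ Hn HG. rewrite dot_scale_r norm_scale (Rabs_pos_eq t); last lra.
move/abs_between => [A B].
have : t * (- dot g h / (2 * (norm h + 1)) * norm h) < t * - dot g h by apply: Rmult_lt_compat_l; lra.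
nra.
Qed.

Lemma descent n Gamma f (y k h : vec n) : open_in_Rn Gamma -> Gamma y ->
  frechet_gradient Gamma f y k -> dot k h < 0 ->
  exists t, 0 < t /\ Gamma (vadd y (vscale t h)) /\ f (vadd y (vscale t h)) < f y.
Proof.
move=> Ho Hy Hf Hneg.
have nh0 := norm_ge0 _ h.
have Hpos : 0 < - dot k h by lra.
have [e0 e1] := aux_small (- dot k h) (norm h) Hpos nh0.
have [del [Hd Hdel]] := Hf _ e0.
have [r [Hr Hor]] := Ho y Hy.
have Hm : 0 < Rmin del r by apply: Rmin_pos.
have [t [Ht01 Hn]] := small_t _ h _ Hm.
have Hn1 : norm (vscale t h) < del by have := Rmin_l del r; lra.
have Hn2 : norm (vscale t h) < r by have := Rmin_r del r; lra.
have HG : Gamma (vadd y (vscale t h)).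
  apply: Hor. have -> : norm (vsub (vadd y (vscale t h)) y) = norm (vscale t h).
    by rewrite /norm; congr sqrt; apply: dot_ext => i; rewrite /vsub /vadd; ring.
  done.
exists t; split; first lra. split=> //.
have := Hdel _ Hn1 HG. rewrite dot_scale_r norm_scale (Rabs_pos_eq t); last lra.
move/abs_between => [A B].
have : t * (- dot k h / (2 * (norm h + 1)) * norm h) < t * - dot k h by apply: Rmult_lt_compat_l; lra.
nra.
Qed.

Lemma nonzero_pos n (k : vec n) : k <> vzero -> 0 < dot k k.
Proof.
move=> kz. have := dot_self_ge0 _ k. case/Rle_lt_or_eq_dec => // H.
exfalso; apply: kz; apply: functional_extensionality => j.
have := sum_zero _ (fun j => k j * k j) (fun j => ltac:(nra)) (esym H) j.
rewrite /vzero /=; nra.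
Qed.

Theorem lemma5 (n : nat) (Gamma S : vec n -> Prop) (f : vec n -> R)
    (grad : vec n -> vec n) :
  open_in_Rn Gamma -> convex_in_Rn Gamma ->
  (forall x, S x -> Gamma x) -> (exists x, S x) -> convex_in_Rn S ->
  (forall x, Gamma x -> frechet_gradient Gamma f x (grad x)) ->
  quasiconvex_on Gamma f ->
  forall x y, argmin_on S f x -> argmin_on S f y ->
    grad x <> vzero -> grad y <> vzero ->
    forall i, vscale (/ norm (grad x)) (grad x) i = vscale (/ norm (grad y)) (grad y) i.
Proof.
move=> Ho Hc HSG _ HSc Hgr Hq x y [Sx Mx] [Sy My] gx0 gy0 i.
have Gx := HSG x Sx. have Gy := HSG y Sy.
have Fx := Hgr x Gx. have Fy := Hgr y Gy.
move: gx0 gy0 Fx Fy. set g := grad x. set k := grad y => gx0 gy0 Fx Fy.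
have fxy : f x = f y by have := Mx y Sy; have := My x Sx; lra.
have gd : 0 <= dot g (vsub y x).
  apply: (dir_ge _ Gamma f x) => // t Ht.
  have St : S (vadd x (vscale t (vsub y x))) by apply: HSc => //; lra.
  split; [exact: HSG | exact: Mx].
have up : forall z, Gamma z -> f z <= f x -> dot g (vsub z x) <= 0.
  move=> z Gz fz. apply: (dir_le _ Gamma f x) => // t Ht.
  split; first by apply: Hc => //; lra.
  have := Hq x z t Gx Gz ltac:(lra). rewrite Rmax_left //.
have key : forall h, dot k h < 0 -> dot g h <= 0.
  move=> h Hh. have [t [t0 [Gt ft]]] := descent _ Gamma f y k h Ho Gy Fy Hh.
  have := up _ Gt ltac:(lra).
  have -> : dot g (vsub (vadd y (vscale t h)) x) = dot g (vadd (vsub y x) (vscale t h)).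
    by apply: dot_ext => // j; rewrite /vsub /vadd /vscale; ring.
  rewrite dot_add_r dot_scale_r => H.
  apply: Rnot_lt_le => H'; have := Rmult_lt_0_compat t _ t0 H'; lra.
have kk0 := nonzero_pos _ k gy0.
have gg0 := nonzero_pos _ g gx0.
have orth : forall v, dot k v = 0 -> dot g v <= 0.
  move=> v Hv. apply: Rnot_lt_le => Hp.
  have [c0 c1] := aux_small (dot g v) (Rabs (dot g k)) Hp (Rabs_pos _).
  set c := dot g v / (2 * (Rabs (dot g k) + 1)) in c0 c1.
  have := key (vsub v (vscale c k)). rewrite !dot_sub_r !dot_scale_r Hv.
  have := Rle_abs (dot g k). move=> Ha H. have := H ltac:(nra). nra.
set lam := dot g k / dot k k.
set v := vsub g (vscale lam k).
have kv : dot k v = 0.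
  rewrite /v dot_sub_r dot_scale_r (dot_comm _ k g) /lam; field; lra.
have gv : dot g v = 0.
  have A := orth v kv.
  have B := orth (vscale (-1) v) ltac:(rewrite dot_scale_r kv; ring).
  rewrite dot_scale_r in B; lra.
have vv : dot v v = 0.
  rewrite {1}/v dot_sub_l dot_scale_l gv kv; ring.
have gj : forall j, g j = lam * k j.
  move=> j. have := sum_zero _ (fun j => v j * v j) (fun j => ltac:(nra)) vv j.
  rewrite /v /vsub /vscale /=. nra.
have ggk : dot g g = lam * (lam * dot k k).
  rewrite -dot_scale_l -dot_scale_r; exact: dot_ext.
have lam0 : 0 <= lam.
  have := key (vscale (-1) k) ltac:(rewrite dot_scale_r; lra).
  rewrite dot_scale_r => H. rewrite /lam. apply: Rle_mult_inv_pos; last lra.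
  lra.
have lampos : 0 < lam by case: (Rle_lt_or_eq_dec _ _ lam0) => // E; rewrite -E in ggk; nra.
have nk0 : 0 < norm k := sqrt_lt_R0 _ kk0.
have ng : norm g = lam * norm k.
  rewrite /norm ggk -Rmult_assoc sqrt_mult_alt; last nra.
  by rewrite sqrt_square; lra.
rewrite /vscale ng gj; field; lra.
Qed.
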